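(* Let $\alpha,\beta,\gamma,\Delta\in\mathbb{C}$ with $(\Delta,\beta)\neq(0,0)$. Consider extensions of conformal $\mathrm{HV}$-modules $$0\to V(\alpha,\beta,\Delta)\to E\to\mathbb{C}c_\gamma\to0,$$ realized as $E=\mathbb{C}[\partial]v_\Delta\oplus\mathbb{C}c_\gamma$ with $\mathbb{C}[\partial]v_\Delta\cong V(\alpha,\beta,\Delta)$ a submodule and $L_\lambda c_\gamma=f(\partial,\lambda)v_\Delta$, $N_\lambda c_\gamma=k(\partial,\lambda)v_\Delta$, $\partial c_\gamma=\gamma c_\gamma+a(\partial)v_\Delta$, with $f,k\in\mathbb{C}[\partial,\lambda]$, $a\in\mathbb{C}[\partial]$. Nontrivial extensions of this form exist if and only if $\alpha+\gamma=0$, $\beta=0$ and $\Delta=1$. The unique nontrivial extension is given, up to equivalence, by $k=0$ and $f(\partial,\lambda)=a(\partial)=a_0$ with $a_0\in\mathbb{C}^*$. Furthermore, all trivial extensions correspond to triples $f(\partial,\lambda)=(\alpha+\gamma+\Delta\lambda)\phi(\partial+\lambda)$, $k(\partial,\lambda)=\beta\phi(\partial+\lambda)$, $a(\partial)=(\partial-\gamma)\phi(\partial)$, with $\phi$ a polynomial.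
   Context: A conformal module over a Lie conformal algebra $R$ is a $\mathbb{C}[\partial]$-module $V$ with $a\mapsto a_\lambda\in\mathrm{End}_{\mathbb{C}}(V)\otimes\mathbb{C}[\lambda]$ satisfying $[a_\lambda,b_\mu]=[a_\lambda b]_{\lambda+\mu}$ and $(\partial a)_\lambda=[\partial,a_\lambda]=-\lambda a_\lambda$. The Heisenberg–Virasoro conformal algebra $\mathrm{HV}$ is the free $\mathbb{C}[\partial]$-module with basis $L,N$ and $\lambda$-brackets $[L_\lambda L]=(\partial+2\lambda)L$, $[L_\lambda N]=(\partial+\lambda)N$, $[N_\lambda L]=\lambda N$, $[N_\lambda N]=0$. $V(\alpha,\beta,\Delta)=\mathbb{C}[\partial]v_\Delta$ with $L_\lambda v_\Delta=(\partial+\alpha+\Delta\lambda)v_\Delta$, $N_\lambda v_\Delta=\beta v_\Delta$. $\mathbb{C}c_\gamma$ is the one-dimensional module with $\partial c_\gamma=\gamma c_\gamma$ and zero $\lambda$-actions. An extension of $W$ by $V$ is an exact sequence $0\to V\to E\to W\to0$ of conformal modules; equivalence via a module map of middle terms compatible with identities; trivial means equivalent to the direct sum. *)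

(* Defs.v *)
From HB Require Import structures.
From mathcomp Require Import all_boot all_order all_algebra.
From mathcomp Require Import reals complex.
Set Implicit Arguments. Unset Strict Implicit. Unset Printing Implicit Defensive.
Import Order.TTheory GRing.Theory Num.Theory.
Local Open Scope ring_scope.

(* The two C[d]-basis elements of HV. *)
Inductive hv_gen := GL | GN.

(* Underlying vector space of E: (p, z) stands for p(d) v + z c. *)
Notation extE C := ({poly C} * C^o)%type.

Section HVModules.
Variable C : fieldType.

(* Convention for two-variable polynomials  F(d, lambda) : {poly {poly C}}:
   the OUTER variable is lambda, the INNER variable is d (= \partial).      *)

(* Structure constants of HV:  [x_lambda y] = \sum_z (hv_bracket x y z)(d,lambda) z
   [L_l L] = (d + 2 l) L,  [L_l N] = (d + l) N,  [N_l L] = l N,  [N_l N] = 0. *)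
Definition hv_bracket (x y z : hv_gen) : {poly {poly C}} :=
  match x, y, z with
  | GL, GL, GL => ('X)%:P + 'X *+ 2
  | GL, GN, GN => ('X)%:P + 'X
  | GN, GL, GN => 'X
  | _, _, _ => 0
  end.

(* A candidate conformal-module structure on extE: the action of d and the
   lambda-actions of the generators, with lambda evaluated at a scalar. *)
Record Estr := MkEstr {
  Eder : extE C -> extE C;
  Eact : hv_gen -> C -> extE C -> extE C }.

(* Conformal HV-module axioms (on the C[d]-basis L, N of HV, the action of
   general elements being determined by (d a)_lambda = - lambda a_lambda):
   - d and each a_lambda are C-linear,
   - [d, a_lambda] = - lambda a_lambda,
   - [x_lambda, y_mu] = [x_lambda y]_{lambda+mu}.                           *)
Definition is_HV_module (M : Estr) : Prop :=
  [/\ (forall (r : C) (u w : extE C), Eder M (r *: u + w) = r *: Eder M u + Eder M w),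
      (forall x l (r : C) (u w : extE C),
          Eact M x l (r *: u + w) = r *: Eact M x l u + Eact M x l w),
      (forall x l (u : extE C),
          Eder M (Eact M x l u) - Eact M x l (Eder M u) = - (l *: Eact M x l u)) &
      (forall x y l m (u : extE C),
          Eact M x l (Eact M y m u) - Eact M y m (Eact M x l u)
          = \sum_(z <- [:: GL; GN])
              ((hv_bracket x y z).[l%:P]).[- (l + m)] *: Eact M z (l + m) u)].

Definition shiftp (l : C) (p : {poly C}) : {poly C} := p \Po ('X + l%:P).

(* The structure on E = C[d]v (+) C c determined by
     L_l v = (d + alpha + Delta l) v,  N_l v = beta v    (V(alpha,beta,Delta)),
     L_l c = f(d,l) v,  N_l c = k(d,l) v,  d c = gamma c + a(d) v,
   extended to all of E by C-linearity and [d, a_l] = -l a_l on C[d] v. *)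
Definition ext_struct (alpha beta gamma Delta : C)
    (f k : {poly {poly C}}) (a : {poly C}) : Estr :=
  MkEstr
    (fun u => ('X * u.1 + u.2 *: a, gamma * u.2))
    (fun x l u => match x with
       | GL => (shiftp l u.1 * ('X + (alpha + Delta * l)%:P) + u.2 *: f.[l%:P], 0)
       | GN => (beta *: shiftp l u.1 + u.2 *: k.[l%:P], 0)
       end).

Definition is_ext alpha beta gamma Delta f k a : Prop :=
  is_HV_module (ext_struct alpha beta gamma Delta f k a).

(* Equivalence of extensions: a module map of middle terms compatible with
   the identity on V (inclusion) and on C c_gamma (projection). *)
Definition ext_equiv (M1 M2 : Estr) : Prop :=
  exists g : extE C -> extE C,
    [/\ (forall (r : C) (u w : extE C), g (r *: u + w) = r *: g u + g w),
        (forall u, g (Eder M1 u) = Eder M2 (g u)),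
        (forall x l u, g (Eact M1 x l u) = Eact M2 x l (g u)),
        (forall p : {poly C}, g (p, 0) = (p, 0)) &
        (forall u, (g u).2 = u.2)].

(* Trivial extension: equivalent to the direct sum V(alpha,beta,Delta) (+) C c_gamma,
   which in this realisation is the data f = k = 0, a = 0. *)
Definition ext_trivial alpha beta gamma Delta f k a : Prop :=
  ext_equiv (ext_struct alpha beta gamma Delta 0 0 0)
            (ext_struct alpha beta gamma Delta f k a).

(* phi(d + lambda) as a two-variable polynomial (outer lambda, inner d). *)
Definition shift2 (phi : {poly C}) : {poly {poly C}} :=
  (map_poly (fun c : C => c%:P%:P) phi).[('X)%:P + 'X].

End HVModules.

(* Main.v *)
Require Import Defs.
From HB Require Import structures.
From mathcomp Require Import all_boot all_order all_algebra.
From mathcomp Require Import reals complex.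
From mathcomp Require Import ring.
Import Order.TTheory GRing.Theory Num.Theory.
Set Implicit Arguments. Unset Strict Implicit.
Local Open Scope ring_scope.

Section Aux.
Variable C : numFieldType.
Implicit Types (alpha beta gamma Delta l m : C) (f k : {poly {poly C}}) (a : {poly C}).

Lemma poly_allroots (p : {poly C}) : (forall x, p.[x] = 0) -> p = 0.
Proof.
move=> H; apply/eqP; apply/negPn/negP => Hp.
have Ha : all (root p) (mkseq (fun i => i%:R) (size p)).
  by apply/allP => x _; apply/rootP; apply: H.
have Hu : uniq (mkseq (fun i => (i%:R : C)) (size p)).
  rewrite map_inj_uniq ?iota_uniq // => i j /eqP; rewrite eqr_nat => /eqP.
  done.
by have := max_poly_roots Hp Ha Hu; rewrite size_mkseq ltnn.
Qed.

Lemma poly2_eq (P Q : {poly {poly C}}) :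
  (forall l : C, P.[l%:P] = Q.[l%:P]) -> P = Q.
Proof.
move=> H; apply/eqP; rewrite -subr_eq0; apply/eqP.
rewrite -[P - Q]swapXYK; set S := swapXY (P - Q).
suff -> : S = 0 by rewrite raddf0.
apply/polyP => j; rewrite coef0; apply: poly_allroots => l.
have := H l; move/eqP; rewrite -subr_eq0 -hornerN -hornerD => /eqP.
rewrite horner_polyC -/S => /(congr1 (fun q : {poly C} => q`_j)).
by rewrite coef_map coef0.
Qed.

Lemma shift2E (phi : {poly C}) l : (shift2 phi).[l%:P] = shiftp l phi.
Proof.
rewrite /shift2 /shiftp.
rewrite -[LHS]/(horner_eval l%:P _) -horner_map /=.
rewrite {2}/horner_eval hornerD hornerC hornerX.
rewrite -map_poly_comp /comp_poly; congr (_.[_]).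
by apply: eq_map_poly => c /=; rewrite /horner_eval hornerC.
Qed.

Lemma eq_lin (A B X Y c : {poly C}) : A = B -> X - Y = c * (A - B) -> X = Y.
Proof. by move=> -> /eqP; rewrite subrr mulr0 subr_eq0 => /eqP. Qed.

Lemma shiftp0 l : shiftp l 0 = 0 :> {poly C}.
Proof. by rewrite /shiftp comp_poly0. Qed.

Lemma shiftpDZ l (r : C) (p q : {poly C}) :
  shiftp l (p + r *: q) = shiftp l p + r *: shiftp l q.
Proof. by rewrite /shiftp comp_polyD comp_polyZ. Qed.

Lemma lin_form (g : extE C -> extE C) :
  (forall (r : C) (u w : extE C), g (r *: u + w) = r *: g u + g w) ->
  (forall p : {poly C}, g (p, 0) = (p, 0)) ->
  (forall u, (g u).2 = u.2) ->
  forall u, g u = (u.1 + u.2 *: (g (0, 1)).1, u.2).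
Proof.
move=> G1 G4 G5 [p z].
have E1 : g (p, z) = z *: g (0, 1) + g (p, 0).
  rewrite -G1; congr g; congr (_, _); rewrite /= ?scaler0 ?add0r ?addr0 //.
  exact: (esym (mulr1 z)).
rewrite E1 G4; case E : (g (0, 1)) => [q y].
have Hy : y = 1 by have := G5 (0, 1); rewrite E.
rewrite Hy /=; congr (_, _); rewrite ?scaler0 ?add0r ?addr0 //.
  by rewrite addrC.
exact: (mulr1 z).
Qed.

Lemma equiv_extract alpha beta gamma Delta f1 k1 a1 f2 k2 a2 :
  ext_equiv (ext_struct alpha beta gamma Delta f1 k1 a1)
            (ext_struct alpha beta gamma Delta f2 k2 a2) ->
  exists phi : {poly C}, a2 = a1 - ('X - gamma%:P) * phi /\ forall l,
    f2.[l%:P] = f1.[l%:P] - shiftp l phi * ('X + (alpha + Delta * l)%:P) /\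
    k2.[l%:P] = k1.[l%:P] - beta *: shiftp l phi.
Proof.
case=> g [G1 G2 G3 G4 G5].
have gE := lin_form G1 G4 G5; set phi := (g (0, 1)).1 in gE.
exists phi; split.
  have := G2 (0, 1); rewrite !gE /= => /(congr1 fst) /= E.
  apply: (eq_lin (c := -1) E).
  rewrite -?mul_polyC; ring.
move=> l; split.
  have := G3 GL l (0, 1); rewrite !gE /= => /(congr1 fst) /= E.
  apply: (eq_lin (c := -1) E).
  rewrite !shiftp0 -!mul_polyC; ring.
have := G3 GN l (0, 1); rewrite !gE /= => /(congr1 fst) /= E.
apply: (eq_lin (c := -1) E).
rewrite !shiftp0 -!mul_polyC; ring.
Qed.


Lemma equiv_build alpha beta gamma Delta f1 k1 a1 f2 k2 a2 (phi : {poly C}) :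
  a2 = a1 - ('X - gamma%:P) * phi -> (forall l,
    f2.[l%:P] = f1.[l%:P] - shiftp l phi * ('X + (alpha + Delta * l)%:P) /\
    k2.[l%:P] = k1.[l%:P] - beta *: shiftp l phi) ->
  ext_equiv (ext_struct alpha beta gamma Delta f1 k1 a1)
            (ext_struct alpha beta gamma Delta f2 k2 a2).
Proof.
move=> Ha Hfk.
exists (fun u : extE C => (u.1 + u.2 *: phi, u.2)); split.
- move=> r [p z] [q y] /=; congr (_, _).
  rewrite /= scalerDr scalerDl scalerA; change (r *: z) with (r * z).
  rewrite -?mul_polyC; ring.
- move=> [p z] /=; congr (_, _); rewrite /= Ha -!mul_polyC; ring.
- move=> [] l [p z] /=; congr (_, _); rewrite /= ?scale0r ?addr0 shiftpDZ; case: (Hfk l) => Hf Hk; rewrite ?Hf ?Hk;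
  rewrite -?mul_polyC; ring.
- by move=> p /=; rewrite scale0r addr0.
- by [].
Qed.


Lemma shiftpM l (p q : {poly C}) : shiftp l (p * q) = shiftp l p * shiftp l q.
Proof. by rewrite /shiftp comp_polyM. Qed.
Lemma shiftpX l : shiftp l 'X = 'X + l%:P :> {poly C}.
Proof. by rewrite /shiftp comp_polyX. Qed.
Lemma shiftpC l (c : C) : shiftp l c%:P = c%:P.
Proof. by rewrite /shiftp comp_polyC. Qed.
Lemma shiftpD l (p q : {poly C}) : shiftp l (p + q) = shiftp l p + shiftp l q.
Proof. by rewrite /shiftp comp_polyD. Qed.
Lemma shiftpZ l (r : C) (p : {poly C}) : shiftp l (r *: p) = r *: shiftp l p.
Proof. by rewrite /shiftp comp_polyZ. Qed.
Lemma shiftpS l m (p : {poly C}) : shiftp l (shiftp m p) = shiftp (m + l) p.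
Proof.
rewrite /shiftp -comp_polyA; congr comp_poly.
rewrite comp_polyD comp_polyX comp_polyC polyCD; ring.
Qed.

Lemma hbE l m x y z : (hv_bracket C x y z).[l%:P].[- (l + m)] =
  match x, y, z with
  | GL, GL, GL => l - m
  | GL, GN, GN => - m
  | GN, GL, GN => l
  | _, _, _ => 0
  end.
Proof.
case: x; case: y; case: z => /=; rewrite ?horner0 //.
- by rewrite !hornerE /=; ring.
- by rewrite !hornerE /=; ring.
- by rewrite !hornerE.
Qed.

Ltac simp := rewrite /= ?horner0 -?mul_polyC ?mulr0 ?addr0 ?mul0r ?add0r;
  rewrite ?(shiftpD, shiftpM, shiftpX, shiftpC, shiftpS, shiftp0).

Lemma is_ext_trivial alpha beta gamma Delta : is_ext alpha beta gamma Delta 0 0 0.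
Proof.
split.
- move=> r [p z] [q y] /=; congr (_, _); rewrite /=.
    rewrite -!mul_polyC; ring.
  by change (gamma * (r * z + y) = r * (gamma * z) + gamma * y); ring.
- move=> [] l r [p z] [q y] /=; congr (_, _); simp; ring.
- move=> [] l [p z] /=; congr (_, _); simp; try ring.
- move=> [] [] l m [p z]; rewrite !big_cons big_nil addr0 !hbE /=; congr (_, _);
  simp; rewrite ?(addrC m l) ?polyCN ?polyCD ?polyCB ?polyCM; try ring.
Qed.


Lemma is_ext_a0 alpha gamma (a0 : C) : alpha + gamma = 0 ->
  is_ext alpha 0 gamma 1 a0%:P%:P 0 a0%:P.
Proof.
move=> Hag; have -> : alpha = - gamma by apply/eqP; rewrite -addr_eq0 Hag.
split.
- move=> r [p z] [q y] /=; congr (_, _); rewrite /=.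
    rewrite -!mul_polyC; change (r *: z) with (r * z); rewrite ?polyCM; ring.
  by change (gamma * (r * z + y) = r * (gamma * z) + gamma * y); ring.
- move=> [] l r [p z] [q y] /=; congr (_, _); rewrite ?hornerC; simp;
  change (r *: z) with (r * z); rewrite ?polyCM ?polyCD; ring.
- move=> [] l [p z] /=; congr (_, _); rewrite ?hornerC; simp; rewrite ?polyCM ?polyCD ?polyCN ?polyCB; try ring.
- move=> [] [] l m [p z]; rewrite !big_cons big_nil addr0 !hbE /=; congr (_, _);
  rewrite ?hornerC; simp; rewrite ?(addrC m l) ?polyCN ?polyCD ?polyCB ?polyCM; try ring.
Qed.

Lemma ext_nec alpha beta gamma Delta f k a :
  is_ext alpha beta gamma Delta f k a -> forall l,
  ('X + (l - gamma)%:P) * f.[l%:P] = shiftp l a * ('X + (alpha + Delta * l)%:P) /\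
  ('X + (l - gamma)%:P) * k.[l%:P] = beta *: shiftp l a.
Proof.
case=> _ _ H3 _ l; split.
  have := H3 GL l (0, 1) => /(congr1 fst) /=.
  rewrite shiftp0 !mul0r !scale1r !add0r mulr0 scale0r addr0.
  rewrite add0r mulr1 => /eqP; rewrite -subr_eq0 => /eqP E.
  apply/eqP; rewrite -subr_eq0; apply/eqP; rewrite -[RHS]E.
  rewrite -!mul_polyC !(polyCB, polyCD, polyCM, polyCN); ring.
have := H3 GN l (0, 1) => /(congr1 fst) /=.
rewrite shiftp0 !scaler0 !scale1r !add0r mulr0 scale0r addr0.
rewrite mulr1 => /eqP; rewrite -subr_eq0 => /eqP E.
apply/eqP; rewrite -subr_eq0; apply/eqP; rewrite -[RHS]E.
rewrite /shiftp linearD /= -!mul_polyC !(polyCB, polyCD, polyCM, polyCN). ring.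
Qed.
Lemma transfer (M1 M2 : Estr C) (g h : extE C -> extE C) :
  (forall (r : C) (u w : extE C), g (r *: u + w) = r *: g u + g w) ->
  (forall (r : C) (u w : extE C), h (r *: u + w) = r *: h u + h w) ->
  (forall u, g (h u) = u) -> (forall u, h (g u) = u) ->
  (forall u, Eder M2 u = g (Eder M1 (h u))) ->
  (forall x l u, Eact M2 x l u = g (Eact M1 x l (h u))) ->
  is_HV_module M1 -> is_HV_module M2.
Proof.
move=> G H GH HG D A [I1 I2 I3 I4].
have gD (u w : extE C) : g (u + w) = g u + g w by rewrite -(scale1r u) G !scale1r.
have g0 : g 0 = 0.
  by have := gD 0 0; rewrite addr0 -{1}[g 0]addr0 => /addrI.
have gZ (r : C) (u : extE C) : g (r *: u) = r *: g u.
  by rewrite -[r *: u]addr0 G g0 addr0.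
have gN (u : extE C) : g (- u) = - g u by rewrite -scaleN1r gZ scaleN1r.
have hD (u w : extE C) : h (u + w) = h u + h w by rewrite -(scale1r u) H !scale1r.
have h0 : h 0 = 0.
  by have := hD 0 0; rewrite addr0 -{1}[h 0]addr0 => /addrI.
have hZ (r : C) (u : extE C) : h (r *: u) = r *: h u.
  by rewrite -[r *: u]addr0 H h0 addr0.
split.
- by move=> r u w; rewrite !D H I1 G.
- by move=> x l r u w; rewrite !A H I2 G.
- move=> x l u; rewrite !D !A !HG -gN -gZ -gN -gD; congr g.
  by rewrite I3.
- move=> x y l m u; rewrite !A !HG -gN -gD I4 !big_cons big_nil !addr0.
  by rewrite big_nil addr0 gD !gZ !A.
Qed.

Lemma equiv_transfer (M1 M2 : Estr C) :
  ext_equiv M1 M2 -> is_HV_module M1 -> is_HV_module M2.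
Proof.
case=> g [G1 G2 G3 G4 G5].
have gE := lin_form G1 G4 G5; set phi := (g (0, 1)).1 in gE.
pose h (u : extE C) : extE C := (u.1 - u.2 *: phi, u.2).
have GH u : g (h u) = u by rewrite gE /h /= subrK; case: u.
have HG u : h (g u) = u by rewrite gE /h /= addrK; case: u.
apply: (@transfer M1 M2 g h) => //.
- move=> r [p z] [q y]; rewrite /h /=; congr (_, _).
  rewrite /= scalerBr scalerDl scalerA; change (r *: z) with (r * z); rewrite -!mul_polyC; ring.
- by move=> u; rewrite G2 GH.
- by move=> x l u; rewrite G3 GH.
Qed.


Lemma shiftpN l (p : {poly C}) : shiftp l (- p) = - shiftp l p.
Proof. by rewrite -scaleN1r shiftpZ scaleN1r. Qed.

Lemma cancelX c (p q : {poly C}) : ('X + c%:P) * p = ('X + c%:P) * q -> p = q.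
Proof. by apply: mulfI; apply: monic_neq0; apply: monicXaddC. Qed.

Lemma shiftp_horner l (p : {poly C}) x : (shiftp l p).[x] = p.[x + l].
Proof. by rewrite /shiftp horner_comp hornerD hornerX hornerC. Qed.

Lemma fpolyE alpha Delta (psi : {poly C}) l :
  ((('X)%:P + (alpha%:P)%:P + Delta%:P *: 'X) * shift2 psi).[l%:P] =
  shiftp l psi * ('X + (alpha + Delta * l)%:P).
Proof.
rewrite hornerM shift2E !hornerD !hornerC hornerZ hornerX polyCD polyCM.
by rewrite mulrC addrA.
Qed.

Lemma kpolyE beta (psi : {poly C}) l :
  ((beta%:P)%:P * shift2 psi).[l%:P] = beta *: shiftp l psi.
Proof. by rewrite hornerM shift2E hornerC mul_polyC. Qed.

Lemma triv_iff alpha beta gamma Delta f k a :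
  (is_ext alpha beta gamma Delta f k a /\ ext_trivial alpha beta gamma Delta f k a)
  <-> exists phi : {poly C},
      [/\ f = (('X)%:P + (alpha%:P)%:P + Delta%:P *: 'X) * shift2 phi,
          k = (beta%:P)%:P * shift2 phi &
          a = ('X - gamma%:P) * phi].
Proof.
split.
  case=> _ /equiv_extract [phi [Ha Hfk]]; exists (- phi); split.
  - apply: poly2_eq => l; rewrite fpolyE; case: (Hfk l) => -> _.
    rewrite horner0 shiftpN -?mul_polyC; ring.
  - apply: poly2_eq => l; rewrite kpolyE; case: (Hfk l) => _ ->.
    rewrite horner0 shiftpN -?mul_polyC; ring.
  - by rewrite Ha; ring.
case=> psi [-> -> ->].
have Heq : ext_trivial alpha beta gamma Delta
   ((('X)%:P + (alpha%:P)%:P + Delta%:P *: 'X) * shift2 psi)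
   ((beta%:P)%:P * shift2 psi) (('X - gamma%:P) * psi).
  apply: (equiv_build (phi := - psi)); first by ring.
  move=> l; rewrite fpolyE kpolyE !horner0 shiftpN -!mul_polyC; split; ring.
split=> //; exact: (equiv_transfer Heq (is_ext_trivial _ _ _ _)).
Qed.

Lemma nontriv_cond alpha beta gamma Delta f k a :
  is_ext alpha beta gamma Delta f k a -> ~ ext_trivial alpha beta gamma Delta f k a ->
  [/\ a.[gamma] != 0, alpha + gamma = 0, beta = 0 & Delta = 1].
Proof.
move=> He Hnt.
have Hag : a.[gamma] != 0.
  apply/negP => /eqP Hr; apply: Hnt.
  have /factor_theorem [psi Hpsi] : root a gamma by apply/rootP.
  apply: (equiv_build (phi := - psi)); first by rewrite Hpsi; ring.
  move=> l; case: (ext_nec He l) => Hf Hk.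
  rewrite Hpsi shiftpM shiftpD shiftpX shiftpN shiftpC in Hf Hk.
  rewrite !horner0 shiftpN; split; apply: (cancelX (c := l - gamma)).
    rewrite Hf -?mul_polyC polyCB; ring.
  rewrite Hk -?mul_polyC polyCB; ring.
have Hev l : a.[gamma] * (gamma - l + alpha + Delta * l) = 0.
  case: (ext_nec He l) => Hf _.
  have := congr1 (fun p => p.[gamma - l]) Hf => /=.
  rewrite !hornerM !hornerD hornerX !hornerC shiftp_horner subrK.
  rewrite addrA [gamma - l + l]subrK subrr mul0r => /esym.
  by rewrite addrA.
have E0 := Hev 0; have E1 := Hev 1.
move: E0; rewrite subr0 mulr0 addr0 => /eqP; rewrite mulf_eq0 (negbTE Hag) /= => /eqP E0.
have HD : Delta = 1.
  move: E1; rewrite mulr1 => /eqP; rewrite mulf_eq0 (negbTE Hag) /= => /eqP E1.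
  apply/eqP; rewrite -subr_eq0; apply/eqP.
  have -> : Delta - 1 = (gamma - 1 + alpha + Delta) - (gamma + alpha) by ring.
  by rewrite E1 E0 subr0.
split=> //; first by rewrite addrC.
case: (ext_nec He 0) => _ Hk.
have := congr1 (fun p => p.[gamma]) Hk => /=.
rewrite hornerM hornerZ shiftp_horner !hornerD hornerX hornerC addr0 add0r subrr mul0r => /esym /eqP.
by rewrite mulf_eq0 (negbTE Hag) orbF => /eqP.
Qed.



Lemma a0_nontriv alpha beta gamma Delta (a0 : C) : a0 != 0 ->
  ~ ext_trivial alpha beta gamma Delta a0%:P%:P 0 a0%:P.
Proof.
move=> Ha0 /equiv_extract [phi [Ha _]].
have := congr1 (fun p => p.[gamma]) Ha => /=. rewrite !hornerE /= subrr mul0r oppr0.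
by move=> E; rewrite E eqxx in Ha0.
Qed.

Lemma nontriv_equiv alpha beta gamma Delta f k a :
  is_ext alpha beta gamma Delta f k a -> ~ ext_trivial alpha beta gamma Delta f k a ->
  exists2 a0 : C, a0 != 0 &
    ext_equiv (ext_struct alpha beta gamma Delta a0%:P%:P 0 a0%:P)
              (ext_struct alpha beta gamma Delta f k a).
Proof.
move=> He Hnt; case: (nontriv_cond He Hnt) => Hag Hal Hb HD.
exists a.[gamma] => //.
have /factor_theorem [psi Hpsi] : root (a - a.[gamma]%:P) gamma.
  by apply/rootP; rewrite hornerD hornerN hornerC subrr.
have Ha : a = a.[gamma]%:P + psi * ('X - gamma%:P) by rewrite -Hpsi addrC subrK.
have Hal' : alpha = - gamma by apply/eqP; rewrite -addr_eq0 Hal.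
apply: (equiv_build (phi := - psi)).
  by rewrite {1}Ha; ring.
move=> l; case: (ext_nec He l) => Hf Hk.
rewrite Hb HD Hal' in Hf Hk *.
rewrite Ha shiftpD shiftpM shiftpD shiftpX shiftpN !shiftpC in Hf Hk.
rewrite horner0 hornerC shiftpN; split; apply: (cancelX (c := l - gamma)).
  rewrite Hf -?mul_polyC !polyCB !polyCD polyCN polyCM; ring.
by rewrite Hk !scale0r subr0 mulr0.
Qed.

End Aux.

Theorem corollary6p2 (R : realType) (alpha beta gamma Delta : complex R) :
  (Delta, beta) != (0, 0) ->
  [/\ (* existence of nontrivial extensions *)
      (exists (f k : {poly {poly complex R}}) (a : {poly complex R}),
          is_ext alpha beta gamma Delta f k a
          /\ ~ ext_trivial alpha beta gamma Delta f k a)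
        <-> [/\ alpha + gamma = 0, beta = 0 & Delta = 1],
      (* the nontrivial extensions, up to equivalence *)
      (alpha + gamma = 0 -> beta = 0 -> Delta = 1 ->
         (forall a0 : complex R, a0 != 0 ->
            is_ext alpha beta gamma Delta a0%:P%:P 0 a0%:P
            /\ ~ ext_trivial alpha beta gamma Delta a0%:P%:P 0 a0%:P)
         /\ (forall f k a, is_ext alpha beta gamma Delta f k a ->
               ~ ext_trivial alpha beta gamma Delta f k a ->
               exists2 a0 : complex R, a0 != 0 &
                 ext_equiv (ext_struct alpha beta gamma Delta a0%:P%:P 0 a0%:P)
                           (ext_struct alpha beta gamma Delta f k a))) &
      (* description of the trivial extensions *)
      forall f k a,
        (is_ext alpha beta gamma Delta f k a
         /\ ext_trivial alpha beta gamma Delta f k a)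
        <-> exists phi : {poly complex R},
              [/\ f = (('X)%:P + (alpha%:P)%:P + Delta%:P *: 'X) * shift2 phi,
                  k = (beta%:P)%:P * shift2 phi &
                  a = ('X - gamma%:P) * phi]].
Proof.
move=> _; split.
- split.
    case=> f [k [a [He Hnt]]]; case: (nontriv_cond He Hnt) => _ *; by split.
  case=> Hag Hb HD; subst beta Delta.
  exists 1%:P%:P, 0, 1%:P; split; first exact: is_ext_a0.
  exact: a0_nontriv (oner_neq0 _).
- move=> Hag Hb HD; subst beta Delta; split.
    by move=> a0 Ha0; split; [exact: is_ext_a0 | exact: a0_nontriv].
  by move=> f k a; exact: nontriv_equiv.
- by move=> f k a; exact: triv_iff.
Qed.
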